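(* Let $(X,d)$ be a reflexive Busemann convex geodesic metric space and let $A,B\subseteq X$ be nonempty, closed and convex, with $A$ bounded. Let $T:A\cup B\to A\cup B$ be a cyclic relatively nonexpansive mapping, and suppose the pair $(A,B)$ has proximal normal structure. Then there exists $(x,y)\in A\times B$ such that $d(x,Tx)=d(y,Ty)=\operatorname{dist}(A,B)$.
   Context: $\operatorname{dist}(A,B)=\inf\{d(x,y):x\in A,y\in B\}$, $\delta(x,A)=\sup\{d(x,y):y\in A\}$, $\delta(A,B)=\sup\{d(x,y):x\in A,y\in B\}$. A geodesic space is one in which any two points are joined by a geodesic segment; a subset is convex if it contains every geodesic segment joining two of its points. $X$ is Busemann convex if for any geodesics $c_1:[0,l_1]\to X$, $c_2:[0,l_2]\to X$, $d(c_1(tl_1),c_2(tl_2))\le (1-t)d(c_1(0),c_2(0))+t\,d(c_1(l_1),c_2(l_2))$ for all $t\in[0,1]$. $X$ is reflexive if every decreasing chain of nonempty closed convex bounded subsets has nonempty intersection. $T$ is relatively nonexpansive if $d(Tx,Ty)\le d(x,y)$ for all $x\in A$, $y\in B$; it is cyclic if $T(A)\subseteq B$ and $T(B)\subseteq A$. A pair $(H_1,H_2)$ is proximal if for every $(a,b)\in H_1\times H_2$ there is $(a',b')\in H_1\times H_2$ with $d(a,b')=d(a',b)=\operatorname{dist}(H_1,H_2)$. A convex pair $(K_1,K_2)$ has proximal normal structure if for every closed bounded convex proximal pair $(H_1,H_2)$ with $H_1\subseteq K_1$, $H_2\subseteq K_2$, $\operatorname{dist}(H_1,H_2)=\operatorname{dist}(K_1,K_2)$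 and $\delta(H_1,H_2)>\operatorname{dist}(H_1,H_2)$, there exists $(x_1,x_2)\in H_1\times H_2$ with $\delta(x_1,H_2)<\delta(H_1,H_2)$ and $\delta(x_2,H_1)<\delta(H_1,H_2)$. *)

(* Defs.v *)
From HB Require Import structures.
From mathcomp Require Import all_boot all_order all_algebra.
From mathcomp Require Import all_classical all_reals.
Set Implicit Arguments. Unset Strict Implicit. Unset Printing Implicit Defensive.
Import Order.TTheory GRing.Theory Num.Theory.
Local Open Scope ring_scope.
Local Open Scope classical_set_scope.

Section MetricDefs.
Variables (R : realType) (X : Type) (d : X -> X -> R).

Definition is_metric : Prop :=
  [/\ forall x y, 0 <= d x y,
      forall x y, d x y = 0 <-> x = y,
      forall x y, d x y = d y x &
      forall x y z, d x z <= d x y + d y z].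

Definition geodesic (c : R -> X) (l : R) : Prop :=
  0 <= l /\ forall s t, 0 <= s <= l -> 0 <= t <= l -> d (c s) (c t) = `|s - t|.

Definition geodesic_space : Prop :=
  forall x y, exists c, [/\ geodesic c (d x y), c 0 = x & c (d x y) = y].

Definition convex_set (C : set X) : Prop :=
  forall x y (c : R -> X) (l : R), C x -> C y -> geodesic c l ->
    c 0 = x -> c l = y -> forall t, 0 <= t <= l -> C (c t).

Definition busemann_convex : Prop :=
  forall (c1 c2 : R -> X) (l1 l2 : R), geodesic c1 l1 -> geodesic c2 l2 ->
    forall t, 0 <= t <= 1 ->
      d (c1 (t * l1)) (c2 (t * l2)) <=
        (1 - t) * d (c1 0) (c2 0) + t * d (c1 l1) (c2 l2).

Definition mclosed (C : set X) : Prop :=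
  forall x, (forall e : R, 0 < e -> exists y, C y /\ d x y < e) -> C x.

Definition mbounded (C : set X) : Prop :=
  exists M : R, forall x y, C x -> C y -> d x y <= M.

Definition reflexive_space : Prop :=
  forall F : set (set X), F !=set0 ->
    (forall C1 C2, F C1 -> F C2 -> C1 `<=` C2 \/ C2 `<=` C1) ->
    (forall C, F C -> [/\ C !=set0, mclosed C, convex_set C & mbounded C]) ->
    exists x, forall C, F C -> C x.

Definition dist_set (A B : set X) : R :=
  inf [set r | exists x y, [/\ A x, B y & r = d x y]].

Definition delta_pt (x : X) (A : set X) : R :=
  sup [set r | exists y, A y /\ r = d x y].

Definition delta_set (A B : set X) : R :=
  sup [set r | exists x y, [/\ A x, B y & r = d x y]].

Definition relatively_nonexpansive (A B : set X) (T : X -> X) : Prop :=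
  forall x y, A x -> B y -> d (T x) (T y) <= d x y.

Definition cyclic_map (A B : set X) (T : X -> X) : Prop :=
  T @` A `<=` B /\ T @` B `<=` A.

Definition proximal_pair (H1 H2 : set X) : Prop :=
  forall a b, H1 a -> H2 b ->
    exists a' b', [/\ H1 a', H2 b', d a b' = dist_set H1 H2 &
                      d a' b = dist_set H1 H2].

Definition proximal_normal_structure (K1 K2 : set X) : Prop :=
  forall H1 H2 : set X,
    mclosed H1 -> mclosed H2 -> mbounded H1 -> mbounded H2 ->
    convex_set H1 -> convex_set H2 -> proximal_pair H1 H2 ->
    H1 `<=` K1 -> H2 `<=` K2 ->
    dist_set H1 H2 = dist_set K1 K2 ->
    dist_set H1 H2 < delta_set H1 H2 ->
    exists x1 x2, [/\ H1 x1, H2 x2, delta_pt x1 H2 < delta_set H1 H2 &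
                     delta_pt x2 H1 < delta_set H1 H2].

End MetricDefs.

(* Main.v *)
Require Import Defs.
From HB Require Import structures.
From mathcomp Require Import all_boot all_order all_algebra.
From mathcomp Require Import all_classical all_reals.
From mathcomp Require Import lra.
Import Order.TTheory GRing.Theory Num.Theory.
Local Open Scope ring_scope.
Local Open Scope classical_set_scope.

Section Proof.
Variables (R : realType) (X : Type) (d : X -> X -> R).
Hypothesis Hd : is_metric d.
Hypothesis Hbus : busemann_convex d.
Hypothesis Hgeo : geodesic_space d.
Hypothesis Hrefl : reflexive_space d.

Lemma d_ge0 x y : 0 <= d x y. Proof. by case: Hd. Qed.
Lemma d_sym x y : d x y = d y x. Proof. by case: Hd. Qed.
Lemma d_tri x y z : d x z <= d x y + d y z. Proof. by case: Hd. Qed.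
Lemma d_xx x : d x x = 0. Proof. by case: Hd => _ H _ _; apply/H. Qed.

Lemma geo_const x : geodesic d (fun _ => x) 0.
Proof.
split => // s t /andP[s0 s1] /andP[t0 t1].
have -> : s = 0 by apply/le_anti; rewrite s0 s1.
have -> : t = 0 by apply/le_anti; rewrite t0 t1.
by rewrite d_xx subrr normr0.
Qed.

Lemma geo_param (l s : R) : 0 <= s <= l -> exists t, 0 <= t <= 1 /\ s = t * l.
Proof.
move=> /andP[s0 sl].
have [l0|l0] := eqVneq l 0.
  exists 0; split; first by rewrite lexx ler01.
  by rewrite mul0r; apply/le_anti; rewrite s0 -l0 sl.
have lp : 0 < l by rewrite lt_neqAle eq_sym l0 (le_trans s0 sl).
exists (s / l); split; last by rewrite divfK.
apply/andP; split; first by rewrite divr_ge0 // ltW.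
by rewrite ler_pdivrMr // mul1r.
Qed.

Lemma bus_pt c (l : R) x (t : R) : geodesic d c l -> 0 <= t <= 1 ->
  d (c (t * l)) x <= (1 - t) * d (c 0) x + t * d (c l) x.
Proof.
move=> gc t01.
have := @Hbus c (fun _ => x) l 0 gc (geo_const x) t t01.
by [].
Qed.

Definition adm (C : set X) := [/\ mclosed d C, convex_set d C & mbounded d C].

Lemma refl_delta (S : R -> set X) :
  (forall a b, 0 < a -> a <= b -> S a `<=` S b) ->
  (forall a, 0 < a -> S a !=set0 /\ adm (S a)) ->
  exists x, forall a, 0 < a -> S a x.
Proof.
move=> mono hS.
have [x Hx] : exists x, forall C, [set C | exists a, 0 < a /\ C = S a] C -> C x.
  apply: Hrefl.
- by exists (S 1); exists 1; rewrite ltr01.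
- move=> C1 C2 [a [a0 ->]] [b [b0 ->]].
  case/orP: (le_total a b) => ab; [left|right]; exact: mono.
- move=> C [a [a0 ->]]; have [ne [? ? ?]] := hS a a0; by split.
by exists x => a a0; apply: Hx; exists a.
Qed.

Lemma convcomb (t a b r : R) : 0 <= t <= 1 -> a <= r -> b <= r ->
  (1 - t) * a + t * b <= r.
Proof.
move=> /andP[t0 t1] ar br.
have h1 : (1 - t) * a <= (1 - t) * r by rewrite ler_wpM2l // subr_ge0.
have h2 : t * b <= t * r by rewrite ler_wpM2l.
have : (1 - t) * r + t * r = r by rewrite -mulrDl subrK mul1r.
lra.
Qed.

Lemma mclosed_ball x r : mclosed d [set y | d x y <= r].
Proof.
move=> y H; apply/ler_addgt0Pr => e e0.
have [z [/= zr dz]] := H e e0.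
have := d_tri x z y; rewrite (d_sym z y). lra.
Qed.

Lemma mclosed_cap (I : Type) (P : I -> set X) (S : set I) :
  (forall i, S i -> mclosed d (P i)) -> mclosed d [set x | forall i, S i -> P i x].
Proof.
move=> H x Hx i Si; apply: (H i Si) => e e0.
by have [y [Py dy]] := Hx e e0; exists y; split => //; apply: Py.
Qed.

Lemma mclosedI (C1 C2 : set X) : mclosed d C1 -> mclosed d C2 -> mclosed d (C1 `&` C2).
Proof.
move=> h1 h2 x Hx; split.
- by apply: h1 => e e0; have [y [[? ?] ?]] := Hx e e0; exists y.
- by apply: h2 => e e0; have [y [[? ?] ?]] := Hx e e0; exists y.
Qed.

Lemma convex_ball x r : convex_set d [set y | d x y <= r].
Proof.
move=> y1 y2 c l b1 b2 gc c0 cl s sl.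
have [t [t01 ->]] := geo_param _ _ sl.
rewrite /= d_sym; apply: le_trans (bus_pt _ _ x _ gc t01) _.
by rewrite c0 cl; apply: convcomb => //; rewrite d_sym.
Qed.

Lemma convex_cap (I : Type) (P : I -> set X) (S : set I) :
  (forall i, S i -> convex_set d (P i)) -> convex_set d [set x | forall i, S i -> P i x].
Proof.
move=> H y1 y2 c l h1 h2 gc c0 cl s sl i Si.
exact: (H i Si y1 y2 c l (h1 i Si) (h2 i Si) gc c0 cl s sl).
Qed.

Lemma convexI (C1 C2 : set X) : convex_set d C1 -> convex_set d C2 -> convex_set d (C1 `&` C2).
Proof.
move=> H1 H2 y1 y2 c l [a1 b1] [a2 b2] gc c0 cl s sl; split.
exact: (H1 y1 y2 c l a1 a2 gc c0 cl s sl).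
exact: (H2 y1 y2 c l b1 b2 gc c0 cl s sl).
Qed.

Lemma mbounded_sub (C1 C2 : set X) : C1 `<=` C2 -> mbounded d C2 -> mbounded d C1.
Proof. by move=> s [M HM]; exists M => x y /s hx /s hy; apply: HM. Qed.

Definition Q (E F : set X) (c : R) :=
  [set x | E x /\ forall e, 0 < e -> exists y, F y /\ d x y <= c + e].

Lemma Q_sub E F c : Q E F c `<=` E. Proof. by move=> x []. Qed.

Lemma Q_mono E E' F F' (c c' : R) : E `<=` E' -> F `<=` F' -> c <= c' ->
  Q E F c `<=` Q E' F' c'.
Proof.
move=> sE sF cc x [Ex H]; split; first exact: sE.
move=> e e0; have [y [Fy dy]] := H e e0; exists y; split; first exact: sF.
lra.
Qed.

Lemma Q_closed E F c : mclosed d E -> mclosed d (Q E F c).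
Proof.
move=> cE x Hx; split.
  by apply: cE => e e0; have [y [[? ?] ?]] := Hx e e0; exists y.
move=> e e0.
have e20 : 0 < e / 2 by rewrite divr_gt0.
have [z [[Ez Hz] dz]] := Hx _ e20.
have [y [Fy dy]] := Hz _ e20.
exists y; split => //.
have := d_tri x z y. lra.
Qed.

Lemma Q_convex E F c : convex_set d E -> convex_set d F -> convex_set d (Q E F c).
Proof.
move=> cvE cvF x1 x2 g l [E1 H1] [E2 H2] gg g0 gl s sl; split.
  exact: (cvE x1 x2 g l E1 E2 gg g0 gl s sl).
move=> e e0.
have [y1 [F1 d1]] := H1 e e0; have [y2 [F2 d2]] := H2 e e0.
have [h [gh h0 hl]] := Hgeo y1 y2.
have [t [t01 st]] := geo_param _ _ sl.
have L0 : 0 <= d y1 y2 := d_ge0 y1 y2.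
have tL : 0 <= t * d y1 y2 <= d y1 y2.
  case/andP: t01 => t0 t1; apply/andP; split; first exact: mulr_ge0.
  by rewrite ler_piMl.
exists (h (t * d y1 y2)); split.
  exact: (cvF y1 y2 h (d y1 y2) F1 F2 gh h0 hl _ tL).
rewrite st; apply: le_trans (Hbus _ _ _ _ gg gh _ t01) _.
by rewrite g0 gl h0 hl; apply: convcomb.
Qed.

Lemma att x (F : set X) (c : R) : adm F ->
  (forall e, 0 < e -> exists y, F y /\ d x y <= c + e) -> exists y, F y /\ d x y <= c.
Proof.
move=> [clF cvF bF] H.
have [y Hy] : exists y, forall a, 0 < a -> (F `&` [set y | d x y <= c + a]) y.
  apply: (@refl_delta (fun a => F `&` [set y | d x y <= c + a])).
- move=> a b a0 ab y [Fy dy]; split => //=; move: dy => /= dy; lra.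
- move=> a a0; split; first by have [y [? ?]] := H a a0; exists y.
  split; [exact: mclosedI (mclosed_ball _ _)
         |exact: convexI (convex_ball _ _)
         |exact: mbounded_sub bF].
exists y; split; first by have [] := Hy 1 ltr01.
apply/ler_addgt0Pr => e e0; by have [] := Hy e e0.
Qed.

Lemma Qne E F (c : R) : adm E -> adm F ->
  (forall e, 0 < e -> exists x y, [/\ E x, F y & d x y <= c + e]) -> Q E F c !=set0.
Proof.
move=> [clE cvE bE] [clF cvF bF] H.
have [x Hx] : exists x, forall a, 0 < a -> Q E F (c + a) x.
  apply: (@refl_delta (fun a => Q E F (c + a))).
- move=> a b a0 ab; apply: Q_mono => //. lra.
- move=> a a0; split.
    have [x [y [Ex Fy dxy]]] := H a a0; exists x; split => // e e0.
    exists y; split => //. lra.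
  split; [exact: Q_closed|exact: Q_convex|exact: mbounded_sub (@Q_sub _ _ _) bE].
exists x; split; first by have [] := Hx 1 ltr01.
move=> e e0.
have e20 : 0 < e / 2 by rewrite divr_gt0.
have [_ H2] := Hx _ e20.
have [y [Fy dy]] := H2 _ e20.
exists y; split => //. lra.
Qed.

Variables (A B : set X) (T : X -> X).
Hypothesis HTcyc : cyclic_map A B T.
Hypothesis HTne : relatively_nonexpansive d A B T.

Definition D := dist_set d A B.

Lemma D_le x y : A x -> B y -> D <= d x y.
Proof.
move=> Ax By; apply: ge_inf; last by exists x, y.
by exists 0 => r [x' [y' [_ _ ->]]]; exact: d_ge0.
Qed.

Definition near (E F : set X) :=
  forall e, 0 < e -> exists x y, [/\ E x, F y & d x y <= D + e].

Definition Sig (E F : set X) :=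
  [/\ E `<=` A, F `<=` B, adm E, adm F & [/\ T @` E `<=` F, T @` F `<=` E & near E F]].

Definition ple (p q : set X * set X) := p.1 `<=` q.1 /\ p.2 `<=` q.2.

Lemma Sig_chain (C : set (set X * set X)) : C !=set0 ->
  (forall p, C p -> Sig p.1 p.2) ->
  (forall p q, C p -> C q -> ple p q \/ ple q p) ->
  Sig [set x | forall p, C p -> p.1 x] [set y | forall p, C p -> p.2 y].
Proof.
move=> [p0 Cp0] HS Htot.
have [sA0 sB0 [_ _ bE0] [_ _ bF0] _] := HS p0 Cp0.
split.
- by move=> x Hx; apply: sA0; apply: Hx.
- by move=> x Hx; apply: sB0; apply: Hx.
- split.
  + apply: mclosed_cap => p Cp; by have [_ _ [] ] := HS p Cp.
  + apply: convex_cap => p Cp; by have [_ _ [] ] := HS p Cp.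
  + by apply: mbounded_sub bE0 => x; apply.
- split.
  + apply: mclosed_cap => p Cp; by have [_ _ _ [] ] := HS p Cp.
  + apply: convex_cap => p Cp; by have [_ _ _ [] ] := HS p Cp.
  + by apply: mbounded_sub bF0 => x; apply.
split.
- move=> _ [x Hx <-] p Cp; have [_ _ _ _ [TEF _ _]] := HS p Cp.
  by apply: TEF; exists x => //; apply: Hx.
- move=> _ [x Hx <-] p Cp; have [_ _ _ _ [_ TFE _]] := HS p Cp.
  by apply: TFE; exists x => //; apply: Hx.
have [x Hx] : exists x, forall G,
    [set G | exists p, C p /\ G = Q p.1 p.2 D] G -> G x.
  apply: Hrefl.
  - by exists (Q p0.1 p0.2 D); exists p0.
  - move=> G1 G2 [p [Cp ->]] [q [Cq ->]].
    by case: (Htot p q Cp Cq) => -[h1 h2]; [left|right]; apply: Q_mono.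
  - move=> G [p [Cp ->]]; have [_ _ aE aF [_ _ nEF]] := HS p Cp.
    case: aE => cE vE bE; case: aF => cF vF bF.
    split; [exact: Qne|exact: Q_closed|exact: Q_convex|].
    exact: mbounded_sub (@Q_sub _ _ _) bE.
move=> e e0.
have [y Hy] : exists y, forall G,
    [set G | exists p, C p /\ G = p.2 `&` [set y | d x y <= D + e]] G -> G y.
  apply: Hrefl.
  - by exists (p0.2 `&` [set y | d x y <= D + e]); exists p0.
  - move=> G1 G2 [p [Cp ->]] [q [Cq ->]].
    case: (Htot p q Cp Cq) => -[h1 h2]; [left|right]; apply: setSI => //.
  - move=> G [p [Cp ->]]; have [_ _ _ aF _] := HS p Cp.
    case: aF => cF vF bF.
    split.
    + have [_ Hq] : Q p.1 p.2 D x by apply: Hx; exists p.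
      by have [y [? ?]] := Hq e e0; exists y.
    + exact: mclosedI (mclosed_ball _ _).
    + exact: convexI (convex_ball _ _).
    + exact: mbounded_sub bF.
exists x, y; split.
- move=> p Cp; apply: (@Q_sub p.1 p.2 D); apply: Hx; by exists p.
- move=> p Cp; have [] // := Hy (p.2 `&` [set y | d x y <= D + e]); by exists p.
- have [] // := Hy (p0.2 `&` [set y | d x y <= D + e]); by exists p0.
Qed.

Hypotheses (HA0 : A !=set0) (HB0 : B !=set0) (HAc : mclosed d A) (HBc : mclosed d B)
  (HAcv : convex_set d A) (HBcv : convex_set d B) (HAb : mbounded d A).

Lemma D_ge0 : 0 <= D.
Proof.
have [a0 Aa0] := HA0; have [b Bb] := HB0.
apply: lb_le_inf; first by exists (d a0 b), a0, b.
by move=> r [x' [y' [_ _ ->]]]; exact: d_ge0.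
Qed.

Lemma Sig_init : exists F0, Sig A F0.
Proof.
have [a0 Aa0] := HA0; have [b Bb] := HB0; have [M HM] := HAb.
have D0 := D_ge0.
pose R0 := d b (T b) + M + d a0 b + D + 1.
exists (B `&` [set y | d b y <= R0]).
case: HTcyc => TAB TBA.
split.
- by [].
- by move=> y [].
- by split.
- split; [exact: mclosedI HBc (mclosed_ball _ _)|exact: convexI HBcv (convex_ball _ _)|].
  exists (R0 + R0) => y y' [_ /= hy] [_ /= hy'].
  have := d_tri y b y'; rewrite (d_sym y b). lra.
split.
- move=> _ [x Ax <-]; split; first by apply: TAB; exists x.
  rewrite /=.
  have h1 := d_tri b (T b) (T x).
  have h2 := HTne _ _ Ax Bb; rewrite (d_sym (T x)) in h2.
  have h3 := d_tri x a0 b.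
  have h4 := HM x a0 Ax Aa0.
  have h5 := d_ge0 b (T b).
  rewrite /R0; lra.
- by move=> _ [y [By _] <-]; apply: TBA; exists y.
move=> e e0.
have m0 : 0 < Num.min e 1 by rewrite lt_min e0 ltr01.
have [r [x [y [Ax By ->]]] hr] :
    exists2 r, [set r | exists x y, [/\ A x, B y & r = d x y]] r & r < D + Num.min e 1.
  apply: inf_adherent => //; split; first by exists (d a0 b), a0, b.
  by exists 0 => r [x' [y' [_ _ ->]]]; exact: d_ge0.
have me : Num.min e 1 <= e by rewrite ge_min lexx.
have m1 : Num.min e 1 <= 1 by rewrite ge_min lexx orbT.
exists x, y; split => //; last by lra.
split => //=.
have h1 := d_tri b a0 y; have h2 := d_tri a0 x y.
have h4 := HM a0 x Aa0 Ax.
have h5 := d_ge0 b (T b).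
rewrite (d_sym b a0) in h1.
rewrite /R0; move: hr; lra.
Qed.

Lemma minimal_pair : exists K1 K2, Sig K1 K2 /\
  forall E F, Sig E F -> E `<=` K1 -> F `<=` K2 -> K1 `<=` E /\ K2 `<=` F.
Proof.
pose Ty := {p : set X * set X | Sig p.1 p.2}.
have [F0 S0] := Sig_init.
pose t0 : Ty := exist _ (A, F0) S0.
pose Rz (p q : Ty) : bool := `[< ple (sval q) (sval p) >].
have [t Ht] : exists t, premaximal (fun x y => Rz x y) t.
  apply: (@ZL_preorder Ty t0 Rz).
  - by move=> p; apply/asboolP; split.
  - move=> p q r /asboolP [h1 h2] /asboolP [h3 h4]; apply/asboolP.
    by split => x hx; [apply: h1; apply: h3|apply: h2; apply: h4].
  - move=> A' Htot.
    have [[s0 As0]|ne] := pselect (A' !=set0); last first.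
      by exists t0 => s As; exfalso; apply: ne; exists s.
    pose C := [set p | exists s, A' s /\ sval s = p].
    have SC : Sig [set x | forall p, C p -> p.1 x] [set y | forall p, C p -> p.2 y].
      apply: Sig_chain.
      - by exists (sval s0), s0.
      - by move=> p [s [_ <-]]; exact: (svalP s).
      - move=> p q [s [As <-]] [s' [As' <-]].
        by case: (Htot s s' As As') => /asboolP h; [right|left].
    exists (exist (fun p => Sig p.1 p.2) (_, _) SC) => s As; apply/asboolP.
    by split => /= x Hx; apply: Hx; exists s.
exists (sval t).1, (sval t).2; split; first exact: (svalP t).
move=> E F SEF sE sF.
have /asboolP [] : Rz (exist (fun p => Sig p.1 p.2) (E, F) SEF) t.
  by apply: Ht; apply/asboolP; split.
by [].
Qed.

Hypothesis Hpns : proximal_normal_structure d A B.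

Lemma mclosed_ball' x r : mclosed d [set y | d y x <= r].
Proof.
have -> : [set y | d y x <= r] = [set y | d x y <= r].
  by apply/funext => y /=; rewrite d_sym.
exact: mclosed_ball.
Qed.

Lemma convex_ball' x r : convex_set d [set y | d y x <= r].
Proof.
have -> : [set y | d y x <= r] = [set y | d x y <= r].
  by apply/funext => y /=; rewrite d_sym.
exact: convex_ball.
Qed.

Lemma delta_pt_ub (K : set X) x y : mbounded d K -> K y -> d x y <= delta_pt d x K.
Proof.
move=> [M HM] Ky; apply: ub_le_sup; last by exists y.
exists (d x y + M) => _ [y' [Ky' ->]].
have := d_tri x y y'; have := HM y y' Ky Ky'. lra.
Qed.

Section Main.
Variables (K1 K2 : set X).
Hypothesis SK : Sig K1 K2.
Hypothesis Kmin : forall E F, Sig E F -> E `<=` K1 -> F `<=` K2 -> K1 `<=` E /\ K2 `<=` F.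

Lemma prox_Q : K1 `<=` Q K1 K2 D /\ K2 `<=` Q K2 K1 D.
Proof.
have [sA sB aK1 aK2 [T12 T21 nK]] := SK.
have aK1' := aK1; have aK2' := aK2.
case: aK1' => cK1 vK1 bK1; case: aK2' => cK2 vK2 bK2.
apply: Kmin; last by apply: Q_sub. 2: by apply: Q_sub.
split.
- by move=> x /Q_sub /sA.
- by move=> x /Q_sub /sB.
- split; [exact: Q_closed|exact: Q_convex|exact: mbounded_sub (@Q_sub _ _ _) bK1].
- split; [exact: Q_closed|exact: Q_convex|exact: mbounded_sub (@Q_sub _ _ _) bK2].
split.
- move=> _ [x [K1x H] <-]; split; first by apply: T12; exists x.
  move=> e e0; have [y [K2y dy]] := H e e0.
  exists (T y); split; first by apply: T21; exists y.
  have := HTne _ _ (sA _ K1x) (sB _ K2y). lra.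
- move=> _ [y [K2y H] <-]; split; first by apply: T21; exists y.
  move=> e e0; have [z [K1z dz]] := H e e0.
  exists (T z); split; first by apply: T12; exists z.
  have := HTne _ _ (sA _ K1z) (sB _ K2y); rewrite (d_sym (T y)); rewrite (d_sym y) in dz. lra.
have [x Qx] := Qne _ _ _ aK1 aK2 nK.
have [y [K2y dxy]] := att x _ _ aK2 (proj2 Qx).
move=> e e0; exists x, y; split => //.
- split => // e' e'0; exists x; split; first by case: Qx.
  rewrite d_sym. have := D_ge0; lra.
- have := D_ge0; lra.
Qed.

Lemma prox1 x : K1 x -> exists y, K2 y /\ d x y = D.
Proof.
have [sA sB aK1 aK2 _] := SK.
move=> /(proj1 prox_Q) [K1x H].
have [y [K2y dy]] := att x _ _ aK2 H.
exists y; split => //; apply/le_anti; rewrite dy D_le //; [exact: sA|exact: sB].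
Qed.

Lemma prox2 y : K2 y -> exists x, K1 x /\ d x y = D.
Proof.
have [sA sB aK1 aK2 _] := SK.
move=> /(proj2 prox_Q) [K2y H].
have [x [K1x dy]] := att y _ _ aK1 H.
exists x; split => //; rewrite d_sym; apply/le_anti; rewrite dy /= d_sym D_le //;
  [exact: sA|exact: sB].
Qed.

Lemma K2ne : K2 !=set0.
Proof.
have [_ _ _ _ [_ _ nK]] := SK.
by have [x [y [_ K2y _]]] := nK 1 ltr01; exists y.
Qed.

Lemma K1ne : K1 !=set0.
Proof.
have [_ _ _ _ [_ _ nK]] := SK.
by have [x [y [K1x _ _]]] := nK 1 ltr01; exists x.
Qed.

Lemma distK : dist_set d K1 K2 = D.
Proof.
have [sA sB _ _ _] := SK.
have [x K1x] := K1ne; have [y [K2y dxy]] := prox1 _ K1x.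
apply/le_anti/andP; split.
- rewrite -dxy; apply: ge_inf; last by exists x, y.
  by exists 0 => r [x' [y' [_ _ ->]]]; exact: d_ge0.
- apply: lb_le_inf; first by exists (d x y), x, y.
  by move=> r [x' [y' [K1x' K2y' ->]]]; apply: D_le; [exact: sA|exact: sB].
Qed.

Lemma hull1 (C : set X) : mclosed d C -> convex_set d C -> T @` K2 `<=` C -> K1 `<=` C.
Proof.
move=> cC vC TC.
have [sA sB aK1 aK2 [T12 T21 nK]] := SK.
case: (aK1) => cK1 vK1 bK1.
suff S' : Sig (K1 `&` C) K2.
  have [h _] := Kmin _ _ S' (fun x (hx : (K1 `&` C) x) => proj1 hx) (fun x hx => hx).
  by move=> x /h [].
split => //.
- by move=> x [/sA].
- split; [exact: mclosedI|exact: convexI|exact: mbounded_sub bK1].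
split.
- by move=> _ [x [K1x _] <-]; apply: T12; exists x.
- by move=> _ [y K2y <-]; split; [apply: T21|apply: TC]; exists y.
move=> e e0.
have [y K2y] := K2ne; have [x [K1x dxy]] := prox2 _ K2y.
exists (T y), (T x); split.
- by split; [apply: T21|apply: TC]; exists y.
- by apply: T12; exists x.
- have := HTne _ _ (sA _ K1x) (sB _ K2y); rewrite d_sym dxy; lra.
Qed.

Lemma hull2 (C : set X) : mclosed d C -> convex_set d C -> T @` K1 `<=` C -> K2 `<=` C.
Proof.
move=> cC vC TC.
have [sA sB aK1 aK2 [T12 T21 nK]] := SK.
case: (aK2) => cK2 vK2 bK2.
suff S' : Sig K1 (K2 `&` C).
  have [_ h] := Kmin _ _ S' (fun x hx => hx) (fun x (hx : (K2 `&` C) x) => proj1 hx).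
  by move=> x /h [].
split => //.
- by move=> x [/sB].
- split; [exact: mclosedI|exact: convexI|exact: mbounded_sub bK2].
split.
- by move=> _ [x K1x <-]; split; [apply: T12|apply: TC]; exists x.
- by move=> _ [y [K2y _] <-]; apply: T21; exists y.
move=> e e0.
have [x K1x] := K1ne; have [y [K2y dxy]] := prox1 _ K1x.
exists (T y), (T x); split.
- by apply: T21; exists y.
- by split; [apply: T12|apply: TC]; exists x.
- have := HTne _ _ (sA _ K1x) (sB _ K2y); rewrite d_sym dxy; lra.
Qed.

Lemma allD x0 y0 : K1 x0 -> K2 y0 -> d x0 y0 <= D.
Proof.
move=> K1x0 K2y0.
have [sA sB aK1 aK2 [T12 T21 nK]] := SK.
case: (aK1) => cK1 vK1 bK1; case: (aK2) => cK2 vK2 bK2.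
rewrite leNgt; apply/negP => Hlt.
pose Dl := delta_set d K1 K2.
have [M1 HM1] := bK1; have [M2 HM2] := bK2.
have Dl_ub : forall x y, K1 x -> K2 y -> d x y <= Dl.
  move=> x y K1x K2y; apply: ub_le_sup; last by exists x, y.
  exists (M1 + d x0 y0 + M2) => _ [x' [y' [K1x' K2y' ->]]].
  have := d_tri x' x0 y'; have := d_tri x0 y0 y'.
  have := HM1 x' x0 K1x' K1x0; have := HM2 y0 y' K2y0 K2y'. lra.
have DDl : D < Dl by apply: lt_le_trans Hlt (Dl_ub _ _ K1x0 K2y0).
have pp : proximal_pair d K1 K2.
  move=> a b K1a K2b.
  have [b' [K2b' h1]] := prox1 _ K1a; have [a' [K1a' h2]] := prox2 _ K2b.
  by exists a', b'; rewrite distK; split.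
have [x1 [x2 [K1x1 K2x2 h1 h2]]] :=
  Hpns K1 K2 cK1 cK2 bK1 bK2 vK1 vK2 pp sA sB distK (eq_ind_r (fun z => z < Dl) DDl distK).
have [u1 [K2u1 du1]] := prox1 _ K1x1.
have [u2 [K1u2 du2]] := prox2 _ K2x2.
have [c1 [gc1 c10 c1l]] := Hgeo x1 u2.
have [c2 [gc2 c20 c2l]] := Hgeo u1 x2.
have t01 : 0 <= (1/2 : R) <= 1.
  have h : (0 : R) <= 1/2 by rewrite divr_ge0.
  rewrite h /=; lra.
have inl (l : R) : 0 <= l -> 0 <= 1/2 * l <= l.
  move=> l0; apply/andP; split; first by rewrite mulr_ge0 // divr_ge0.
  by rewrite ler_piMl // ?(andP t01).2.
pose z1 := c1 (1/2 * d x1 u2); pose z2 := c2 (1/2 * d u1 x2).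
have K1z1 : K1 z1 by apply: (vK1 x1 u2 c1 (d x1 u2) K1x1 K1u2 gc1 c10 c1l); apply: inl; exact: d_ge0.
have K2z2 : K2 z2 by apply: (vK2 u1 x2 c2 (d u1 x2) K2u1 K2x2 gc2 c20 c2l); apply: inl; exact: d_ge0.
have dz : d z1 z2 <= D.
  apply: le_trans (Hbus _ _ _ _ gc1 gc2 _ t01) _.
  rewrite c10 c1l c20 c2l du1 du2. lra.
pose d1 := delta_pt d x1 K2; pose d2 := delta_pt d x2 K1.
pose r := (Dl + Num.max d1 d2) / 2.
have rlt : r < Dl.
  have : Num.max d1 d2 < Dl by rewrite gt_max h1 h2.
  rewrite /r; lra.
have m1 : d1 <= Num.max d1 d2 by rewrite le_max lexx.
have m2 : d2 <= Num.max d1 d2 by rewrite le_max lexx orbT.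
have z1r : forall y, K2 y -> d z1 y <= r.
  move=> y K2y; apply: le_trans (bus_pt _ _ y _ gc1 t01) _.
  rewrite c10 c1l.
  have := delta_pt_ub _ x1 _ bK2 K2y; have := Dl_ub _ _ K1u2 K2y.
  rewrite -/d1 /r; lra.
have z2r : forall x, K1 x -> d x z2 <= r.
  move=> x K1x; rewrite d_sym; apply: le_trans (bus_pt _ _ x _ gc2 t01) _.
  rewrite c20 c2l.
  have := delta_pt_ub _ x2 _ bK1 K1x; have := Dl_ub _ _ K1x K2u1.
  rewrite -/d2 (d_sym u1) /r; lra.
pose L1 := K1 `&` [set x | forall y, K2 y -> d x y <= r].
pose L2 := K2 `&` [set y | forall x, K1 x -> d x y <= r].
have SL : Sig L1 L2.
  split.
  - by move=> x [/sA].
  - by move=> x [/sB].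
  - split.
    + apply: mclosedI => //.
      exact: (@mclosed_cap _ (fun y => [set x | d x y <= r]) K2 (fun y _ => mclosed_ball' y r)).
    + apply: convexI => //.
      exact: (@convex_cap _ (fun y => [set x | d x y <= r]) K2 (fun y _ => convex_ball' y r)).
    + by apply: (mbounded_sub _ _ _ bK1) => x [].
  - split.
    + apply: mclosedI => //.
      exact: (@mclosed_cap _ (fun x => [set y | d x y <= r]) K1 (fun x _ => mclosed_ball x r)).
    + apply: convexI => //.
      exact: (@convex_cap _ (fun x => [set y | d x y <= r]) K1 (fun x _ => convex_ball x r)).
    + by apply: (mbounded_sub _ _ _ bK2) => x [].
  split.
  - move=> _ [x [K1x Hx] <-]; split; first by apply: T12; exists x.
    move=> w K1w.
    have : [set w | d w (T x) <= r] w; last by [].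
    apply: (hull1 _ (mclosed_ball' _ _) (convex_ball' _ _)) => //.
    move=> _ [y K2y <-] /=.
    have := HTne _ _ (sA _ K1x) (sB _ K2y); have := Hx y K2y.
    rewrite (d_sym (T y)); lra.
  - move=> _ [y [K2y Hy] <-]; split; first by apply: T21; exists y.
    move=> w K2w.
    have : [set w | d (T y) w <= r] w; last by [].
    apply: (hull2 _ (mclosed_ball _ _) (convex_ball _ _)) => //.
    move=> _ [x K1x <-] /=.
    have := HTne _ _ (sA _ K1x) (sB _ K2y); have := Hy x K1x.
    rewrite (d_sym (T y)); lra.
  move=> e e0; exists z1, z2; split => //; lra.
have [sub1 _] := Kmin _ _ SL (fun x (hx : L1 x) => proj1 hx) (fun x (hx : L2 x) => proj1 hx).
have : Dl <= r.
  apply: ge_sup; first by exists (d x0 y0), x0, y0.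
  move=> _ [x [y [K1x K2y ->]]].
  by have [_ ] := sub1 x K1x; apply.
lra.
Qed.

End Main.

Lemma main_sec : exists x y, [/\ A x, B y, d x (T x) = D & d y (T y) = D].
Proof.
have [K1 [K2 [SK Kmin]]] := minimal_pair.
have [sA sB _ _ [T12 T21 _]] := SK.
have [x K1x] := K1ne _ _ SK.
have K2Tx : K2 (T x) by apply: T12; exists x.
have K1TTx : K1 (T (T x)) by apply: T21; exists (T x).
exists x, (T x); split.
- exact: sA.
- exact: sB.
- apply/le_anti; rewrite (allD _ _ SK Kmin _ _ K1x K2Tx) D_le //; [exact: sA|exact: sB].
- apply/le_anti; rewrite d_sym (allD _ _ SK Kmin _ _ K1TTx K2Tx) D_le //; [exact: sA|exact: sB].
Qed.

End Proof.

Theorem mainTheorem2 (R : realType) (X : Type) (d : X -> X -> R)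
  (Hd : is_metric d) (Hgeo : geodesic_space d) (Hbus : busemann_convex d)
  (Hrefl : reflexive_space d)
  (A B : set X) (HA0 : A !=set0) (HB0 : B !=set0)
  (HAc : mclosed d A) (HBc : mclosed d B)
  (HAcv : convex_set d A) (HBcv : convex_set d B)
  (HAb : mbounded d A)
  (T : X -> X) (HTcyc : cyclic_map A B T)
  (HTne : relatively_nonexpansive d A B T)
  (Hpns : proximal_normal_structure d A B) :
  exists x y, [/\ A x, B y, d x (T x) = dist_set d A B &
                  d y (T y) = dist_set d A B].
Proof.
exact: (@main_sec _ _ _ Hd Hbus Hgeo Hrefl _ _ _ HTcyc HTne HA0 HB0 HAc HBc HAcv HBcv HAb Hpns).
Qed.
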